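(* Let $\vartheta\in\Theta$ and let $\Delta_T>0$ satisfy $0<\liminf_{T\to\infty}\Delta_T\le\limsup_{T\to\infty}\Delta_T\le\frac{1}{4\vartheta}$. Then $$\liminf_{T\to\infty}\frac{I_{T,0}(\vartheta)^{-1}+I_{T,\infty}(\vartheta)^{-1}}{I_{T,\Delta_T}(\vartheta)^{-1}}>1,$$ where $I_{T,0}(\vartheta)=T/\vartheta$, $I_{T,\infty}(\vartheta)=\frac{T\Delta_T^{-1}}{2\vartheta^2}$ and $I_{T,\Delta}(\vartheta)=T\Delta\,\varphi(\vartheta,\Delta)$. Equivalently, $\liminf_{T\to\infty}\vartheta\Delta_T(1+2\vartheta\Delta_T)\,\varphi(\vartheta,\Delta_T)>1$.
   Context: Under $\mathbb P_\vartheta$, $X_t=\sum_{i=1}^{N_t}\varepsilon_i$ ($X_0=0$), with $(N_t)$ a homogeneous Poisson process of intensity $\vartheta\in\Theta\subseteq(0,\infty)$ and $\varepsilon_i$ i.i.d., independent of $(N_t)$, $\mathbb P(\varepsilon_i=\pm1)=1/2$. Then $\mathbb P_\vartheta(X_\Delta=k)=e^{-\vartheta\Delta}\mathcal I_{|k|}(\vartheta\Delta)$, $k\in\mathbb Z$, with $\mathcal I_\nu(x)=\sum_{m\ge0}\frac{(x/2)^{2m+\nu}}{m!\,\Gamma(\nu+m+1)}$ the modified Bessel function of the first kind. Set $h_\Delta(\vartheta,k)=\mathcal I_{|k|+1}(\vartheta\Delta)/\mathcal I_{|k|}(\vartheta\Delta)$ and $\varphi(\vartheta,\Delta)=\mathbb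 E_\vartheta\big[\big(h_\Delta(\vartheta,X_\Delta)+(\vartheta\Delta)^{-1}|X_\Delta|-1\big)^2\big]$. *)

(* Defs.v *)
From Stdlib Require Import Reals ZArith ClassicalEpsilon.
Open Scope R_scope.

(* Value of a convergent real series sum_{n>=0} u n
   (chosen by classical description; 0 if the series diverges). *)
Definition series_value (u : nat -> R) : R :=
  epsilon (inhabits 0) (fun l => infinite_sum u l).

Definition zsum (u : Z -> R) : R :=
  u 0%Z + series_value (fun n => u (Z.of_nat (S n)) + u (- Z.of_nat (S n))%Z).

(* Modified Bessel function of the first kind, integer order nu:
   I_nu(x) = sum_{m>=0} (x/2)^(2m+nu) / (m! Gamma(nu+m+1)),  Gamma(nu+m+1) = (nu+m)! *)
Definition besselI (nu : nat) (x : R) : R :=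
  series_value (fun m => (x / 2) ^ (2 * m + nu) / (INR (fact m) * INR (fact (nu + m)))).

(* P_theta(X_Delta = k) = e^{-theta Delta} I_{|k|}(theta Delta) *)
Definition pmf (theta Delta : R) (k : Z) : R :=
  exp (- (theta * Delta)) * besselI (Z.abs_nat k) (theta * Delta).

Definition hD (Delta theta : R) (k : Z) : R :=
  besselI (S (Z.abs_nat k)) (theta * Delta) / besselI (Z.abs_nat k) (theta * Delta).

(* phi(theta,Delta) = E_theta[(h_Delta(theta,X_Delta) + (theta Delta)^{-1}|X_Delta| - 1)^2] *)
Definition phi (theta Delta : R) : R :=
  zsum (fun k => pmf theta Delta k *
         (hD Delta theta k + / (theta * Delta) * IZR (Z.abs k) - 1) ^ 2).

Definition I_T0 (theta T : R) : R := T / theta.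
Definition I_Tinf (theta T Delta : R) : R := T * / Delta / (2 * theta ^ 2).
Definition I_TDelta (theta T Delta : R) : R := T * Delta * phi theta Delta.

(* liminf_{T -> oo} f T > c  (in the extended reals) *)
Definition liminf_gt (f : R -> R) (c : R) : Prop :=
  exists c', c' > c /\ exists T0, forall T, T >= T0 -> f T >= c'.

(* limsup_{T -> oo} f T <= c *)
Definition limsup_le (f : R -> R) (c : R) : Prop :=
  forall eps, eps > 0 -> exists T0, forall T, T >= T0 -> f T <= c + eps.

(* Main.v *)
Require Import Defs.
From Stdlib Require Import Reals ZArith Lra Lia Psatz ClassicalEpsilon FunctionalExtensionality.
From Coquelicot Require Import Coquelicot.
Open Scope R_scope.

Lemma sv_is (u : nat -> R) l : infinite_sum u l -> series_value u = l.
Proof.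
  intro H. unfold series_value.
  pose proof (epsilon_spec (inhabits 0) (fun l => infinite_sum u l) (ex_intro _ l H)) as H2.
  exact (uniqueness_sum u _ _ H2 H).
Qed.

Lemma sv_Series u : ex_series u -> series_value u = Series u.
Proof. intro H. apply sv_is. apply is_series_Reals. apply Series_correct; auto. Qed.

Lemma ex_geom c q : 0 <= q < 1 -> ex_series (fun n => c * q ^ n).
Proof.
  intro Hq. exists (c * / (1 - q)).
  apply (is_series_scal_l c (fun n => q ^ n)). apply is_series_geom.
  rewrite Rabs_pos_eq; lra.
Qed.

Lemma Series_geom c q : 0 <= q < 1 -> Series (fun n => c * q ^ n) = c / (1 - q).
Proof.
  intro Hq. apply is_series_unique.
  apply (is_series_scal_l c (fun n => q ^ n)). apply is_series_geom.
  rewrite Rabs_pos_eq; lra.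
Qed.

Lemma Series_ge0 a : (forall n, 0 <= a n) -> ex_series a -> 0 <= Series a.
Proof.
  intros H He.
  assert (E : Series (fun _:nat => 0) = 0).
  { rewrite (Series_ext _ (fun n => 0 * (1/2)^n)) by (intro; ring).
    rewrite Series_geom by lra. field. }
  rewrite <- E. apply Series_le; auto. intro n; split; [lra|auto].
Qed.

Definition bt (n : nat) (x : R) (m : nat) : R :=
  (x / 2) ^ (2 * m + n) / (INR (fact m) * INR (fact (n + m))).

Lemma fact_ge1 k : 1 <= INR (fact k).
Proof. apply (le_INR 1). apply lt_O_fact. Qed.

Lemma pow_split y n m : y ^ (2*m+n) = y^n * (y^2)^m.
Proof. rewrite pow_add, <- pow_mult. ring. Qed.

Lemma div_ge1 A D : 0 <= A -> 1 <= D -> 0 <= A / D <= A.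
Proof.
  intros HA HD. assert (H : A / D * D = A) by (field; lra).
  assert (0 <= A / D) by (apply Rdiv_le_0_compat; lra).
  split; nra.
Qed.

Lemma bt_bounds n x m : 0 <= x -> 0 <= bt n x m <= (x/2)^n * ((x/2)^2)^m.
Proof.
  intro Hx. unfold bt. rewrite pow_split.
  assert (H1 := fact_ge1 m); assert (H2 := fact_ge1 (n+m)).
  assert (0 <= (x/2)^n) by (apply pow_le; lra).
  assert (0 <= ((x/2)^2)^m) by (apply pow_le; apply pow_le; lra).
  apply div_ge1; [apply Rmult_le_pos; auto | nra].
Qed.

Lemma bt_ex n x : 0 <= x <= 1 -> ex_series (bt n x).
Proof.
  intro Hx. apply (@ex_series_le R_AbsRing R_CompleteNormedModule _ (fun m => (x/2)^n * ((x/2)^2)^m)).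
  - intro m. destruct (bt_bounds n x m) as [A B]; try lra.
    change (Rabs (bt n x m) <= (x/2)^n * ((x/2)^2)^m).
    rewrite Rabs_pos_eq; auto.
  - apply ex_geom. split; [apply pow_le; lra | simpl; nra].
Qed.

Lemma J_Series n x : 0 <= x <= 1 -> besselI n x = Series (bt n x).
Proof. intro Hx. apply sv_Series. apply bt_ex; auto. Qed.

Lemma bt0 n x : bt n x 0 = (x/2)^n / INR (fact n).
Proof.
  unfold bt. replace (2*0+n)%nat with n by lia. rewrite Nat.add_0_r.
  change (INR (fact 0)) with 1. rewrite Rmult_1_l. reflexivity.
Qed.

Lemma J_lower n x : 0 <= x <= 1 -> (x/2)^n / INR (fact n) <= besselI n x.
Proof.
  intro Hx. rewrite J_Series; auto. rewrite Series_incr_1 by (apply bt_ex; auto).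
  rewrite bt0.
  assert (0 <= Series (fun k => bt n x (S k))).
  { apply Series_ge0. intro; apply bt_bounds; lra.
    apply (ex_series_incr_1 (bt n x)). apply bt_ex; auto. }
  lra.
Qed.

Lemma J_pos n x : 0 < x <= 1 -> 0 < besselI n x.
Proof.
  intro Hx. eapply Rlt_le_trans; [|apply J_lower; lra].
  apply Rdiv_lt_0_compat. apply pow_lt; lra. pose proof (fact_ge1 n); lra.
Qed.

Lemma J_upper2 n x : 0 <= x <= 1 -> besselI n x <= 2 * (x/2)^n.
Proof.
  intro Hx. rewrite J_Series; auto.
  assert (Hq : 0 <= (x/2)^2 < 1) by (split; [apply pow_le; lra| simpl; nra]).
  eapply Rle_trans. apply Series_le. intro m. apply (bt_bounds n x m); lra.
  apply ex_geom; auto.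
  rewrite Series_geom; auto.
  assert (0 <= (x/2)^n) by (apply pow_le; lra).
  assert ((x/2)^2 <= 1/4) by (simpl; nra).
  apply Rmult_le_reg_r with (1 - (x/2)^2); [lra|].
  unfold Rdiv. rewrite Rmult_assoc, Rinv_l by lra. nra.
Qed.

Lemma div_mono A D1 D2 : 0 <= A -> 0 < D1 <= D2 -> A / D2 <= A / D1.
Proof.
  intros HA HD. unfold Rdiv. apply Rmult_le_compat_l; auto.
  apply Rinv_le_contravar; lra.
Qed.

Lemma bt_shift n x m : 0 <= x -> bt (S n) x m <= (x/2) * bt n x m.
Proof.
  intro Hx. unfold bt.
  replace (2*m + S n)%nat with (S (2*m+n)) by lia. rewrite <- tech_pow_Rmult.
  replace (S n + m)%nat with (S (n+m)) by lia.
  assert (H1 := fact_ge1 m); assert (H2 := fact_ge1 (n+m)).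
  assert (H3 : INR (fact (n+m)) <= INR (fact (S (n+m)))).
  { apply le_INR. apply fact_le. lia. }
  assert (0 <= (x/2)^(2*m+n)) by (apply pow_le; lra).
  unfold Rdiv. rewrite Rmult_assoc. apply Rmult_le_compat_l; [lra|].
  apply div_mono; auto. split; nra.
Qed.

Lemma J_shift n x : 0 <= x <= 1 -> besselI (S n) x <= (x/2) * besselI n x.
Proof.
  intro Hx. rewrite !J_Series; auto.
  rewrite <- Series_scal_l.
  apply Series_le.
  - intro m. split. apply bt_bounds; lra. apply bt_shift; lra.
  - apply (@ex_series_scal_l R_AbsRing R_NormedModule (x/2) (bt n x)). apply bt_ex; auto.
Qed.

Lemma J1_upper x : 0 <= x <= 1 -> besselI 1 x <= x/2 + x^3/8.
Proof.
  intro Hx. rewrite J_Series; auto. rewrite Series_incr_1 by (apply bt_ex; auto).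
  rewrite bt0. change (INR (fact 1)) with 1.
  assert (Hq : 0 <= (x/2)^2 < 1) by (split; [apply pow_le; lra| simpl; nra]).
  assert (HS : Series (fun k => bt 1 x (S k)) <= Series (fun k => ((x/2)^3/2) * ((x/2)^2)^k)).
  { apply Series_le; [|apply ex_geom; auto].
    intro k. split. apply bt_bounds; lra.
    unfold bt.
    replace ((x/2)^(2 * S k + 1)) with ((x/2)^3 * ((x/2)^2)^k)
      by (rewrite <- pow_mult, <- pow_add; f_equal; lia).
    assert (H1 := fact_ge1 (S k)).
    assert (H2 : 2 <= INR (fact (1 + S k))).
    { change 2 with (INR (fact 2)). apply le_INR, fact_le. lia. }
    assert (0 <= (x/2)^3 * ((x/2)^2)^k).
    { apply Rmult_le_pos; apply pow_le; try lra. }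
    replace ((x/2)^3/2 * ((x/2)^2)^k) with ((x/2)^3 * ((x/2)^2)^k / 2) by field.
    apply div_mono; auto. nra. }
  rewrite Series_geom in HS; auto.
  assert (HQ : (x/2)^2 <= 1/2) by (simpl; nra).
  assert (H0 : (x/2)^3/2/(1-(x/2)^2) <= (x/2)^3).
  { assert (0 <= (x/2)^3) by (apply pow_le; lra).
    apply Rmult_le_reg_r with (1 - (x/2)^2); [lra|].
    unfold Rdiv. rewrite Rmult_assoc, Rinv_l by lra. nra. }
  replace (x^3/8) with ((x/2)^3) by (simpl; field).
  replace ((x/2)^1/1) with (x/2) by (simpl; field).
  lra.
Qed.

Definition w (x : R) (n : nat) : R :=
  exp (- x) * besselI n x * (besselI (S n) x / besselI n x + / x * INR n - 1) ^ 2.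

Lemma abs_nat_opp z : Z.abs_nat (- z) = Z.abs_nat z.
Proof. destruct z; reflexivity. Qed.

Lemma IZR_abs k : IZR (Z.abs k) = INR (Z.abs_nat k).
Proof. rewrite <- Nat2Z.inj_abs_nat, <- INR_IZR_INZ. reflexivity. Qed.

Lemma phi_eq theta Delta : phi theta Delta =
  w (theta*Delta) 0 + series_value (fun n => w (theta*Delta) (S n) + w (theta*Delta) (S n)).
Proof.
  unfold phi, zsum. f_equal. apply f_equal. apply functional_extensionality. intro n.
  unfold pmf, hD, w. rewrite !IZR_abs, abs_nat_opp, Zabs2Nat.id. reflexivity.
Qed.

Lemma w_ge0 x n : 0 < x <= 1 -> 0 <= w x n.
Proof.
  intro Hx. unfold w. apply Rmult_le_pos. apply Rmult_le_pos.
  left; apply exp_pos. left; apply J_pos; auto.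
  apply pow2_ge_0.
Qed.

Lemma w_upper x m : 0 < x <= 1 -> w x m <= besselI m x * (/ x * INR m + 1) ^ 2.
Proof.
  intro Hx. unfold w.
  assert (HJ := J_pos m x Hx). assert (HJ1 := J_pos (S m) x Hx).
  assert (Hs := J_shift m x ltac:(lra)).
  set (J := besselI m x) in *. set (J1 := besselI (S m) x) in *.
  assert (Hh : 0 <= J1 / J <= 1).
  { split. apply Rdiv_le_0_compat; lra.
    apply Rmult_le_reg_r with J; [lra|]. unfold Rdiv. rewrite Rmult_assoc, Rinv_l by lra. nra. }
  assert (Hc : 0 <= / x * INR m).
  { apply Rmult_le_pos. left; apply Rinv_0_lt_compat; lra. apply pos_INR. }
  set (c := / x * INR m) in *. set (h := J1 / J) in *.
  assert (He : exp (- x) <= 1).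
  { rewrite <- exp_0. left. apply exp_increasing; lra. }
  assert (Hq : (h + c - 1)^2 <= (c + 1)^2) by nra.
  assert (0 < exp (-x)) by apply exp_pos.
  assert (0 <= (h + c - 1)^2) by apply pow2_ge_0.
  assert (exp (-x) * J * (h + c - 1)^2 <= 1 * J * (h + c - 1)^2).
  { apply Rmult_le_compat_r; auto. apply Rmult_le_compat_r; lra. }
  assert (J * (h + c - 1)^2 <= J * (c + 1)^2) by (apply Rmult_le_compat_l; lra).
  lra.
Qed.

Lemma sq_le n : (INR n + 2)^2 <= 4 * 4^n.
Proof.
  induction n. simpl; lra.
  rewrite S_INR. simpl pow in *. assert (0 <= INR n) by apply pos_INR. nra.
Qed.

Lemma v_upper x n : 0 < x <= 1 ->
  w x (S n) + w x (S n) <= (8 / x) * (2 * x) ^ n.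
Proof.
  intro Hx.
  assert (H1 := w_upper x (S n) Hx).
  assert (H2 := J_upper2 (S n) x ltac:(lra)).
  assert (H3 := sq_le n).
  rewrite S_INR in H1.
  assert (Hp : 0 <= (x/2)^n) by (apply pow_le; lra).
  assert (Hpe : (x/2)^n * 4^n = (2*x)^n) by (rewrite <- Rpow_mult_distr; f_equal; field).
  assert (Hix : 1 <= / x).
  { rewrite <- Rinv_1. apply Rinv_le_contravar; lra. }
  assert (0 <= INR n) by apply pos_INR.
  assert (Hb : / x * (INR n + 1) + 1 <= / x * (INR n + 2)) by nra.
  assert (Hb0 : 0 <= / x * (INR n + 1) + 1) by nra.
  assert (HJ := J_pos (S n) x Hx).
  assert (Hsq : (/ x * (INR n + 1) + 1)^2 <= (/ x * (INR n + 2))^2).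
  { apply pow_incr; auto. }
  assert (besselI (S n) x * (/ x * (INR n + 1) + 1)^2 <= 2 * (x/2)^(S n) * (/ x * (INR n + 2))^2).
  { apply Rmult_le_compat; try lra. apply pow2_ge_0. }
  assert (E : 2 * (x/2)^(S n) * (/ x * (INR n + 2))^2 = (1/x) * (x/2)^n * (INR n + 2)^2).
  { simpl pow. field. lra. }
  assert ((1/x) * (x/2)^n * (INR n + 2)^2 <= (1/x) * (x/2)^n * (4 * 4^n)).
  { apply Rmult_le_compat_l; auto. apply Rmult_le_pos; auto. unfold Rdiv; rewrite Rmult_1_l; lra. }
  assert (E2 : (8 / x) * (2 * x) ^ n = 2 * ((1/x) * (x/2)^n * (4 * 4^n))).
  { rewrite <- Hpe. field. lra. }
  lra.
Qed.

Lemma v_ex x : 0 < x <= 2/5 -> ex_series (fun n => w x (S n) + w x (S n)).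
Proof.
  intro Hx.
  apply (@ex_series_le R_AbsRing R_CompleteNormedModule _ (fun n => (8/x) * (2*x)^n)).
  - intro n. change (Rabs (w x (S n) + w x (S n)) <= 8 / x * (2 * x) ^ n).
    assert (0 <= w x (S n)) by (apply w_ge0; lra).
    rewrite Rabs_pos_eq by lra. apply v_upper; lra.
  - apply ex_geom. lra.
Qed.

Lemma poly_ineq x : 0 < x <= 29/100 ->
  1 + x/20 <= (1 + 2*x) * (1 - x) * (x*(1 - x - x^3/4) + (1-x)^2 + x*(2-x)^2/4).
Proof.
  intro Hx.
  assert (H2 : x^2 <= 29/100 * x) by (simpl; nra).
  assert (H3 : x^3 <= 29/100 * x^2) by (simpl; nra).
  assert (H4 : x^4 <= 29/100 * x^3) by (simpl; nra).
  assert (H5 : 0 <= x^5) by (apply pow_le; lra).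
  assert (H6 : 0 <= x^6) by (apply pow_le; lra).
  assert (Epoly : (1 + 2*x) * (1 - x) * (x*(1 - x - x^3/4) + (1-x)^2 + x*(2-x)^2/4)
    = 1 + x - 3*x^2 - 3/4*x^3 + 2*x^4 - 3/4*x^5 + 1/2*x^6) by field.
  rewrite Epoly.
  assert (H5' : x^5 <= 29/100 * x^4) by (simpl; nra).
  assert (0 <= x^3) by (apply pow_le; lra).
  assert (0 <= x^4) by (apply pow_le; lra).
  nra.
Qed.

Lemma main_ineq x : 0 < x <= 29/100 ->
  1 + x/20 <= x * (1 + 2*x) * (w x 0 + series_value (fun n => w x (S n) + w x (S n))).
Proof.
  intro Hx.
  assert (Hx1 : 0 < x <= 1) by lra.
  rewrite sv_Series by (apply v_ex; lra).
  assert (Hex := v_ex x ltac:(lra)).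
  rewrite Series_incr_1 by auto.
  rewrite Series_incr_1 by (apply (ex_series_incr_1 (fun n => w x (S n) + w x (S n))); auto).
  assert (Hrest : 0 <= Series (fun k => w x (S (S (S k))) + w x (S (S (S k))))).
  { apply Series_ge0. intro k. assert (0 <= w x (S (S (S k)))) by (apply w_ge0; lra). lra.
    apply (ex_series_incr_1 (fun k => w x (S (S k)) + w x (S (S k)))).
    apply (ex_series_incr_1 (fun n => w x (S n) + w x (S n))). auto. }
  assert (HJ0 := J_lower 0 x ltac:(lra)). simpl in HJ0.
  assert (HJ1 := J_lower 1 x ltac:(lra)). simpl in HJ1.
  assert (HJ2 := J_lower 2 x ltac:(lra)). simpl in HJ2.
  assert (HJ1u := J1_upper x ltac:(lra)).
  assert (P0 := J_pos 0 x Hx1). assert (P1 := J_pos 1 x Hx1).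
  assert (P2 := J_pos 2 x Hx1). assert (P3 := J_pos 3 x Hx1).
  set (E := exp (- x)).
  assert (HE : 1 - x <= E) by (unfold E; pose proof (exp_ineq1_le (-x)); lra).
  assert (HEp : 0 < E) by (unfold E; apply exp_pos).
  set (J0 := besselI 0 x) in *. set (J1 := besselI 1 x) in *.
  set (J2 := besselI 2 x) in *. set (J3 := besselI 3 x) in *.
  set (a := / x).
  assert (Ha : x * a = 1) by (unfold a; field; lra).
  assert (Ha1 : 1 <= a).
  { unfold a. rewrite <- Rinv_1. apply Rinv_le_contravar; lra. }
  assert (W0 : E * (J0 - 2 * J1) <= w x 0).
  { unfold w. fold E J0 J1. change (INR 0) with 0. rewrite Rmult_assoc.
    replace (J0 * (J1 / J0 + / x * 0 - 1) ^ 2) with (J1 * (J1 / J0) - 2 * J1 + J0) by (field; lra).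
    assert (0 <= J1 * (J1 / J0)) by (apply Rmult_le_pos; [lra| apply Rdiv_le_0_compat; lra]).
    apply Rmult_le_compat_l; lra. }
  assert (W1 : E * ((x/2) * (a - 1)^2) <= w x 1).
  { unfold w. fold E J1 J2 a. change (INR 1) with 1.
    assert (0 <= J2 / J1) by (apply Rdiv_le_0_compat; lra).
    assert ((a - 1)^2 <= (J2 / J1 + a * 1 - 1)^2) by nra.
    rewrite Rmult_assoc. apply Rmult_le_compat_l; [lra|].
    apply Rmult_le_compat; try lra. apply pow2_ge_0. }
  assert (W2 : E * ((x^2/8) * (2 * a - 1)^2) <= w x 2).
  { unfold w. fold E J2 J3 a. replace (INR 2) with 2 by (simpl; lra).
    assert (0 <= J3 / J2) by (apply Rdiv_le_0_compat; lra).
    assert ((2 * a - 1)^2 <= (J3 / J2 + a * 2 - 1)^2) by nra.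
    rewrite Rmult_assoc. apply Rmult_le_compat_l; [lra|].
    apply Rmult_le_compat; [simpl; nra | apply pow2_ge_0 | simpl in HJ2 |- *; lra | lra]. }
  assert (F1 : x * 2 * ((x/2) * (a - 1)^2) = (1 - x)^2).
  { replace (x * 2 * ((x/2) * (a - 1)^2)) with ((x * a - x)^2) by (simpl; field). rewrite Ha. field. }
  assert (F2 : x * 2 * ((x^2/8) * (2 * a - 1)^2) = x * (2 - x)^2 / 4).
  { replace (x * 2 * ((x^2/8) * (2 * a - 1)^2)) with (x * (2 * (x * a) - x)^2 / 4) by (simpl; field). rewrite Ha. field. }
  set (B := x*(1 - x - x^3/4) + (1-x)^2 + x*(2-x)^2/4).
  assert (HB : 0 <= B).
  { unfold B. assert (x^3 <= 1) by (simpl; nra). nra. }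
  assert (Hsum : E * B <= x * (w x 0 + (w x 1 + w x 1 + (w x 2 + w x 2 + Series (fun k => w x (S (S (S k))) + w x (S (S (S k)))))))).
  { assert (x * (J0 - 2*J1) >= x * (1 - x - x^3/4)).
    { apply Rle_ge. apply Rmult_le_compat_l; lra. }
    assert (E * (x * (J0 - 2*J1)) >= E * (x * (1 - x - x^3/4))).
    { apply Rle_ge. apply Rmult_le_compat_l; lra. }
    unfold B. nra. }
  pose proof (poly_ineq x Hx). fold B in H.
  assert ((1 + 2*x) * (1-x) * B <= (1 + 2*x) * (E * B)).
  { rewrite Rmult_assoc. apply Rmult_le_compat_l; [lra|]. apply Rmult_le_compat_r; lra. }
  assert ((1 + 2*x) * (E * B) <= (1 + 2*x) * (x * (w x 0 + (w x 1 + w x 1 + (w x 2 + w x 2 + Series (fun k => w x (S (S (S k))) + w x (S (S (S k))))))))).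
  { apply Rmult_le_compat_l; lra. }
  lra.
Qed.

Theorem theorem5 (theta : R) (Delta : R -> R) :
  0 < theta ->
  (forall T, 0 < T -> 0 < Delta T) ->
  liminf_gt Delta 0 ->
  limsup_le Delta (1 / (4 * theta)) ->
  liminf_gt
    (fun T => (/ I_T0 theta T + / I_Tinf theta T (Delta T))
              / (/ I_TDelta theta T (Delta T)))
    1.
Proof.
  intros Ht HD [c1 [Hc1 [T1 HT1]]] Hsup.
  destruct (Hsup (1/(25*theta))) as [T2 HT2].
  { apply Rdiv_lt_0_compat; lra. }
  exists (1 + theta * c1 / 20). split.
  { assert (0 < theta*c1) by nra. lra. }
  exists (Rmax 1 (Rmax T1 T2)). intros T HT. cbv beta.
  assert (Hm1 := Rmax_l 1 (Rmax T1 T2)).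
  assert (Hm2 := Rmax_r 1 (Rmax T1 T2)).
  assert (Hm3 := Rmax_l T1 T2). assert (Hm4 := Rmax_r T1 T2).
  assert (HTp : 0 < T) by lra.
  assert (HDp : 0 < Delta T) by (apply HD; lra).
  assert (HDl : Delta T >= c1) by (apply HT1; lra).
  assert (HDu : Delta T <= 1/(4*theta) + 1/(25*theta)) by (apply HT2; lra).
  set (D := Delta T) in *.
  assert (Hx : 0 < theta * D <= 29/100).
  { split. nra.
    assert (Hq : theta * (1/(4*theta) + 1/(25*theta)) = 29/100) by (field; lra).
    rewrite <- Hq. apply Rmult_le_compat_l; lra. }
  pose proof (main_ineq (theta * D) Hx) as Hmain.
  rewrite <- phi_eq in Hmain.
  assert (Hphi : 0 < phi theta D).
  { destruct (Rle_or_lt (phi theta D) 0) as [Hn|Hn]; auto.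
    assert (theta * D * (1 + 2 * (theta * D)) * phi theta D <= 0).
    { apply Rmult_le_0_l; auto. nra. }
    lra. }
  assert (Hval : (/ I_T0 theta T + / I_Tinf theta T D) / (/ I_TDelta theta T D)
                 = theta * D * (1 + 2 * (theta * D)) * phi theta D).
  { unfold I_T0, I_Tinf, I_TDelta. field. repeat split; lra. }
  rewrite Hval.
  assert (theta * c1 <= theta * D) by (apply Rmult_le_compat_l; lra).
  lra.
Qed.
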